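(* Let $T$ be a tree with $n$ vertices. The straight-line drawing of $T$ produced by Algorithm 2 is monotone (and planar), and every vertex is placed at an integer point $(x,y)$ with $|x|\le\frac{n-\mathrm{odd}(n)}{2}$ and $0\le y\le\frac{n-\mathrm{odd}(n)}{2}$. Hence the drawing fits on a grid of $n\times\frac{n+1}{2}$ points when $n$ is odd and of $(n+1)\times(\frac{n}{2}+1)$ points when $n$ is even.
   Context: A vertex $r$ of an $n$-vertex tree $T$ is a gravity root if every connected component of $T\setminus r$ has at most $\frac{n}{2}$ vertices. $\mathrm{odd}(n)=1$ if $n$ is odd, $0$ otherwise. $T_v$ is the subtree rooted at $v$, $|T_v|$ its number of vertices. A grid of $a\times b$ points means $a$ consecutive integer $x$-values and $b$ consecutive integer $y$-values. Strategy 1: for a non-leaf vertex $u$ with assigned $a_1(u)<a_2(u)$ and children $v_1,\dots,v_m$ in order, set $a_1(v_1)=a_1(u)$, $a_1(v_i)=a_2(v_{i-1})$ for $1<i\le m$, and $a_2(v_i)=a_1(v_i)+(a_2(u)-a_1(u))\cdot\frac{|T_{v_i}|}{|T_u|-1}$. Point rule $P_1(\theta_1,\theta_2)$ for $0\le\theta_1<\theta_2\le\frac{\pi}{2}$, with $d=\lceil\frac{1}{\theta_2-\theta_1}\rceil$: (i) if $\theta_2-\theta_1>\frac{\pi}{4}$: $(1,1)$; (ii) if $\arctan(\frac12)<\theta_2-\theta_1\le\frac{\pi}{4}$: $(1,2)$ if $\theta_1\ge\frac{\pi}{4}$, $(1,1)$ if $\arctan(\frac12)\le\theta_1<\frac{\pi}{4}$,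 $(2,1)$ if $\theta_1<\arctan(\frac12)$; (iii) if $\theta_2-\theta_1\le\arctan(\frac12)$: $(d,\lfloor\tan(\theta_1)d+1\rfloor)$ if $\theta_2\le\frac{\pi}{4}$, $(1,1)$ if $\theta_1<\frac{\pi}{4}<\theta_2$, $(\lfloor\tan(\frac{\pi}{2}-\theta_2)d+1\rfloor,d)$ if $\theta_1\ge\frac{\pi}{4}$. Point rule $P_2(\beta_1,\beta_2)$ for $0\le\beta_1<\beta_2\le\pi$: $(0,1)$ if $\beta_1<\frac{\pi}{2}<\beta_2$; $P_1(\beta_1,\beta_2)$ if $\beta_2\le\frac{\pi}{2}$; $(-x,y)$ with $(x,y)=P_1(\pi-\beta_2,\pi-\beta_1)$ if $\beta_1\ge\frac{\pi}{2}$. Algorithm 2 (input: a tree $T$, possibly with a cyclic order of neighbors at each vertex): choose a gravity root $r$ and root $T$ at $r$ (children ordered according to the given embedding, if any); set $a_1(r)=0$, $a_2(r)=\pi$, assign angles to all other vertices top-down by Strategy 1; place $r$ at $(0,0)$; top-down, place each child $v$ of an already placed vertex $u$ at (position of $u$) $+P_2(a_1(v),a_2(v))$. A path $p_0,\dots,p_k$ in a straight-line drawing is monotone if there is a line $\ell$ such that the orthogonal projections of $p_0,\dots,p_k$ onto $\ell$ appear along $\ell$ in this order; a drawing is monotone if every pair of vertices is joined by a monotone path. *)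

(* Defs.v *)
From Stdlib Require Import Reals ZArith.
From mathcomp Require Import all_boot.

Set Implicit Arguments.
Unset Strict Implicit.
Unset Printing Implicit Defensive.

Local Open Scope R_scope.

(* Int_part x = up x - 1 is the floor of x. *)
Definition Zfloor (x : R) : Z := Int_part x.
Definition Zceil (x : R) : Z := (- Int_part (- x))%Z.

Definition P1 (t1 t2 : R) : Z * Z :=
  let w := (t2 - t1) in
  let d := Zceil (/ w) in
  if Rlt_dec (PI / 4) w then (1, 1)%Z
  else if Rlt_dec (atan (1 / 2)) w then
    (if Rle_dec (PI / 4) t1 then (1, 2)%Z
     else if Rle_dec (atan (1 / 2)) t1 then (1, 1)%Z
     else (2, 1)%Z)
  else if Rle_dec t2 (PI / 4) then (d, Zfloor (tan t1 * IZR d + 1))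
  else if Rlt_dec t1 (PI / 4) then (1, 1)%Z
  else (Zfloor (tan (PI / 2 - t2) * IZR d + 1), d).

Definition P2 (b1 b2 : R) : Z * Z :=
  if (if Rlt_dec b1 (PI / 2) then (if Rlt_dec (PI / 2) b2 then true else false) else false)
  then (0, 1)%Z
  else if Rle_dec b2 (PI / 2) then P1 b1 b2
  else let p := P1 (PI - b2) (PI - b1) in ((- p.1)%Z, p.2).

Definition is_tree (V : finType) (adj : rel V) : Prop :=
  symmetric adj /\ irreflexive adj /\ (forall x y : V, connect adj x y) /\
  ~ (exists c : seq V, [/\ uniq c, (3 <= size c)%N & cycle adj c]).

Definition del_rel (V : finType) (adj : rel V) (r : V) : rel V :=
  [rel x y | [&& adj x y, x != r & y != r]].

(* r is a gravity root: every connected component of T \ r has at most n/2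
   vertices (the component of v != r is the set of w connected to v in T \ r). *)
Definition gravity_root (V : finType) (adj : rel V) (r : V) : Prop :=
  forall v : V, v != r ->
    (#|[pred w | connect (del_rel adj r) v w]| * 2 <= #|V|)%N.

Definition rooted_at (V : finType) (adj : rel V) (r : V) (par : V -> V) : Prop :=
  par r = r /\ (forall v, v != r -> adj v (par v)) /\ (forall v, fconnect par v r).

(* ch u is an ordering (any order, e.g. the one given by an embedding)
   of the children of u *)
Definition child_order (V : finType) (r : V) (par : V -> V) (ch : V -> seq V) : Prop :=
  forall u, uniq (ch u) /\ (forall v, (v \in ch u) = (v != r) && (par v == u)).

Definition subtree_size (V : finType) (par : V -> V) (v : V) : nat :=
  #|[pred w | fconnect par w v]|.

Definition strategy1 (V : finType) (r : V) (par : V -> V) (ch : V -> seq V)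
    (a1 a2 : V -> R) : Prop :=
  a1 r = 0 /\ a2 r = PI /\
  forall u i, (i < size (ch u))%N ->
    let v := nth u (ch u) i in
    a1 v = (if i is j.+1 then a2 (nth u (ch u) j) else a1 u) /\
    a2 v = (a1 v + (a2 u - a1 u) *
              (INR (subtree_size par v) / INR (subtree_size par u - 1))).

Definition placement (V : finType) (r : V) (par : V -> V) (a1 a2 : V -> R)
    (pos : V -> Z * Z) : Prop :=
  pos r = (0, 0)%Z /\
  forall v, v != r ->
    pos v = (((pos (par v)).1 + (P2 (a1 v) (a2 v)).1)%Z,
             ((pos (par v)).2 + (P2 (a1 v) (a2 v)).2)%Z).

Definition algorithm2_drawing (V : finType) (adj : rel V) (pos : V -> Z * Z) : Prop :=
  exists (r : V) (par : V -> V) (ch : V -> seq V) (a1 a2 : V -> R),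
    [/\ gravity_root adj r, rooted_at adj r par, child_order r par ch,
        strategy1 r par ch a1 a2 & placement r par a1 a2 pos].

Definition rpt (p : Z * Z) : R * R := (IZR p.1, IZR p.2).

Definition on_segment (q a b : R * R) : Prop :=
  exists t : R, (0 <= t <= 1) /\
    q.1 = (a.1 + t * (b.1 - a.1)) /\ q.2 = (a.2 + t * (b.2 - a.2)).

Definition planar_drawing (V : finType) (adj : rel V) (pos : V -> Z * Z) : Prop :=
  injective pos /\
  forall (a b c d : V) (q : R * R), adj a b -> adj c d ->
    ~ ((a = c /\ b = d) \/ (a = d /\ b = c)) ->
    on_segment q (rpt (pos a)) (rpt (pos b)) ->
    on_segment q (rpt (pos c)) (rpt (pos d)) ->
    exists w, (w = a \/ w = b) /\ (w = c \/ w = d) /\ q = rpt (pos w).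

Definition monotone_path (V : finType) (pos : V -> Z * Z) (u : V) (p : seq V) : Prop :=
  exists dx dy : R, forall i, (i < size p)%N ->
    let a := rpt (pos (nth u (u :: p) i)) in
    let b := rpt (pos (nth u (u :: p) i.+1)) in
    (a.1 * dx + a.2 * dy < b.1 * dx + b.2 * dy).

Definition monotone_drawing (V : finType) (adj : rel V) (pos : V -> Z * Z) : Prop :=
  forall u v : V, exists p : seq V,
    path adj u p /\ last u p = v /\ monotone_path pos u p.

Definition fits_grid (V : finType) (pos : V -> Z * Z) (a b : nat) : Prop :=
  exists x0 y0 : Z, forall v : V,
    (x0 <= (pos v).1 < x0 + Z.of_nat a)%Z /\ (y0 <= (pos v).2 < y0 + Z.of_nat b)%Z.

(* Main.v *)
Require Import Defs.
From Stdlib Require Import Reals ZArith Lra Lia.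
From mathcomp Require Import all_boot.

Set Implicit Arguments.
Unset Strict Implicit.
Unset Printing Implicit Defensive.

Local Open Scope R_scope.


Lemma PI_gt3 : 3 < PI.
Proof. have := PI2_3_2; lra. Qed.

Lemma tan_gt_id x : 0 < x < PI/2 -> x < tan x.
Proof.
move=> [h0 h1].
have hc : 0 < cos x by apply: cos_gt_0; lra.
have x2 : x < 2 by have := PI_4; lra.
have [hs _] := sin_bound x 0 ltac:(lra) ltac:(have := PI2_Rlt_PI; lra).
have [_ hcu] := cos_bound x 0 ltac:(have := PI_RGT_0; lra) ltac:(lra).
unfold sin_approx, sin_term, cos_approx, cos_term in hs, hcu; simpl in hs, hcu.
unfold tan; apply (Rmult_lt_reg_r (cos x)); first lra.
field_simplify; last lra.
have hh : x * cos x <= x * (1 + -1 * (x * x) / 2 + x * (x * (x * x)) / 24).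
  apply: Rmult_le_compat_l; lra.
have k : 0 < (x*x*x)*(8 - x*x).
  apply: Rmult_lt_0_compat; [apply: Rmult_lt_0_compat; [nra|lra] | nra].
nra.
Qed.

Lemma tan_mono x y : 0 <= x -> x < y -> y < PI/2 -> tan x < tan y.
Proof. move=> h0 h1 h2; apply: tan_increasing; have := PI_RGT_0; lra. Qed.

Lemma tan_ge0 x : 0 <= x -> x < PI/2 -> 0 <= tan x.
Proof.
move=> h0 h1; case: (Req_dec x 0) => [->|h]; first by rewrite tan_0; lra.
by left; apply: tan_gt_0; lra.
Qed.

Lemma tan_add a w : 0 <= a -> 0 < w -> a + w < PI/2 -> tan a + w < tan (a + w).
Proof.
move=> ha hw haw.
have ca : 0 < cos a by apply: cos_gt_0; have := PI_RGT_0; lra.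
have cw : 0 < cos w by apply: cos_gt_0; have := PI_RGT_0; lra.
have caw : 0 < cos (a + w) by apply: cos_gt_0; have := PI_RGT_0; lra.
have ta := tan_ge0 ha ltac:(lra).
have tw := tan_gt_id (conj hw (ltac:(lra) : w < PI/2)).
have den : 1 - tan a * tan w = cos (a + w) / (cos a * cos w).
  rewrite cos_plus /tan; field; lra.
have hden : 0 < 1 - tan a * tan w.
  rewrite den; apply: Rdiv_lt_0_compat => //; nra.
have hden1 : 1 - tan a * tan w <= 1 by nra.
rewrite tan_plus; try lra.
have : tan a + tan w <= (tan a + tan w) / (1 - tan a * tan w).
  apply: (Rmult_le_reg_r (1 - tan a * tan w)) => //.
  field_simplify; try lra; nra.
lra.
Qed.

Definition A0 := atan (1/2).

Lemma A0_pos : 0 < A0.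
Proof. rewrite /A0 -atan_0; apply: atan_increasing; lra. Qed.

Lemma A0_lt : A0 < PI/4.
Proof. rewrite /A0 -atan_1; apply: atan_increasing; lra. Qed.

Lemma tanA0 : tan A0 = 1/2.
Proof. by rewrite /A0 tan_atan. Qed.

Lemma A0_half : A0 < 1/2.
Proof.
rewrite -[X in _ < X]tanA0; apply: tan_gt_id; have := A0_pos; have := A0_lt; lra.
Qed.

Lemma tan_2A0 : tan (A0 + A0) = 4/3.
Proof.
have h1 := A0_pos; have h2 := A0_lt; have := PI_RGT_0 => hp.
rewrite tan_plus; rewrite ?tanA0.
all: try (apply: Rgt_not_eq; apply: cos_gt_0; lra).
field. lra.
Qed.

Lemma A0_2 : PI/4 < A0 + A0.
Proof.
have h1 := A0_pos; have h2 := A0_lt; have := PI_RGT_0 => hp.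
case: (Rlt_le_dec (PI/4) (A0 + A0)) => // h.
have : tan (A0 + A0) <= tan (PI/4).
  case: (Req_dec (A0 + A0) (PI/4)) => [->|ne]; first lra.
  left; apply: tan_mono; lra.
rewrite tan_2A0 tan_PI4; lra.
Qed.

Lemma tan_PI4_A0 : tan (PI/4 + A0) = 3.
Proof.
have h1 := A0_pos; have h2 := A0_lt; have := PI_RGT_0 => hp.
rewrite tan_plus; rewrite ?tanA0 ?tan_PI4.
all: try (apply: Rgt_not_eq; apply: cos_gt_0; lra).
field. lra.
Qed.

Lemma atan2_eq : atan 2 = PI/2 - A0.
Proof.
have := atan_inv 2 ltac:(lra); rewrite /A0 => h.
have -> : 1/2 = /2 by field.
lra.
Qed.

Lemma tan_shift s : 0 < s < PI/2 -> tan (PI/2 - s) = / tan s.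
Proof.
move=> hs; have := PI_RGT_0 => hp.
have c : 0 < cos s by apply: cos_gt_0; lra.
have si : 0 < sin s by apply: sin_gt_0; lra.
rewrite /tan sin_shift cos_shift; field; lra.
Qed.


Lemma Zceil_spec x : x <= IZR (Defs.Zceil x) < x + 1.
Proof.
have e : IZR (Defs.Zceil x) = - IZR (Int_part (- x)) by rewrite -opp_IZR. rewrite e; have [h1 h2] := base_Int_part (- x); lra.
Qed.

Lemma Zfloor_spec x : IZR (Defs.Zfloor x) <= x < IZR (Defs.Zfloor x) + 1.
Proof. rewrite /Defs.Zfloor; have [h1 h2] := base_Int_part x; lra. Qed.

Lemma core3 s1 s2 : 0 <= s1 -> s1 < s2 -> s2 <= PI/4 -> s2 - s1 <= A0 ->
  let d := Defs.Zceil (/ (s2 - s1)) in let y := Defs.Zfloor (tan s1 * IZR d + 1) in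
  0 < IZR d /\ 0 < IZR y /\ tan s1 < IZR y / IZR d /\ IZR y / IZR d < tan s2 /\
  IZR d <= PI / (2 * (s2 - s1)) /\ IZR y <= IZR d.
Proof.
move=> h0 h1 h2 h3 d y.
have hp := PI_gt3; have ha := A0_half.
set w := s2 - s1 in h3 d y *.
have hw : 0 < w by rewrite /w; lra.
have [d1 d2] := Zceil_spec (/ w); rewrite -/d in d1 d2.
have iw : 0 < / w by apply: Rinv_0_lt_compat.
have dpos : 0 < IZR d by lra.
have [y1 y2] := Zfloor_spec (tan s1 * IZR d + 1); rewrite -/y in y1 y2.
have t1 := tan_ge0 h0 ltac:(lra).
have t1l : tan s1 < 1 by rewrite -tan_PI4; apply: tan_mono; lra.
have td : 0 <= tan s1 * IZR d by nra.
have ypos : 0 < IZR y by lra.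
have dw : / IZR d <= w.
  rewrite -(Rinv_inv w); apply: Rinv_le_contravar => //.
have key : tan s1 + w < tan s2.
  have -> : s2 = s1 + w by rewrite /w; lra.
  apply: tan_add => //; have := A0_lt; lra.
split => //; split => //; split.
  apply: (Rmult_lt_reg_r (IZR d)) => //; field_simplify; lra.
split.
  have : IZR y / IZR d <= tan s1 + / IZR d.
    apply: (Rmult_le_reg_r (IZR d)) => //; field_simplify; lra.
  lra.
split.
  have e : PI / (2 * w) = (PI / 2) * / w by field; lra.
  rewrite e; have : / w + 1 <= PI / 2 * / w.
    have : 1 <= (PI/2 - 1) * / w.
      apply: (Rmult_le_reg_r w) => //; field_simplify; lra.
    lra.
  lra.
have : (y < d + 1)%Z by apply: lt_IZR; rewrite plus_IZR; nra.
move=> hz; apply: IZR_le; lia.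
Qed.

Lemma slope_lo m t : 0 <= t -> t < atan m -> tan t < m.
Proof.
move=> h0 h1; rewrite -[X in _ < X](tan_atan m); apply: tan_mono => //.
by have [_ ] := atan_bound m.
Qed.

Lemma slope_hi m t : atan m < t -> t <= PI/2 -> t = PI/2 \/ m < tan t.
Proof.
move=> h0 h1; case: (Req_dec t (PI/2)) => [->|ne]; first by left.
right; rewrite -[X in X < _](tan_atan m); apply: tan_increasing => //.
  by have [] := atan_bound m.
lra.
Qed.

Lemma bnd k w : 0 < w -> k * (2 * w) <= PI -> k <= PI / (2 * w).
Proof.
move=> hw h; apply: (Rmult_le_reg_r (2 * w)); first lra.
field_simplify; lra.
Qed.

Lemma P1_spec t1 t2 : 0 <= t1 -> t1 < t2 -> t2 <= PI/2 ->
  let p := P1 t1 t2 in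
  0 < IZR p.1 /\ 0 < IZR p.2 /\ tan t1 < IZR p.2 / IZR p.1 /\
  (t2 = PI/2 \/ IZR p.2 / IZR p.1 < tan t2) /\
  IZR p.1 <= PI / (2 * (t2 - t1)) /\ IZR p.2 <= PI / (2 * (t2 - t1)).
Proof.
move=> h0 h1 h2 p.
have hp := PI_gt3; have ha := A0_pos; have hb := A0_lt; have hc := A0_2.
have hw : 0 < t2 - t1 by lra.
rewrite /p /P1.
case: (Rlt_dec (PI / 4) (t2 - t1)) => c1 /=.
  have e : 1 / 1 = 1 by field.
  rewrite e; do 2 (split; first lra).
  split; first by apply: slope_lo; rewrite ?atan_1; lra.
  split; first by apply: slope_hi; rewrite ?atan_1; lra.
  by split; apply: bnd; lra.
case: (Rlt_dec (atan (1 / 2)) (t2 - t1)) => c2 /=.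
  rewrite -/A0 in c2 *.
  case: (Rle_dec (PI / 4) t1) => c3 /=.
    have e : 2 / 1 = 2 by field.
    rewrite e; do 2 (split; first lra).
    split; first by apply: slope_lo; rewrite ?atan2_eq; lra.
    split; first by apply: slope_hi; rewrite ?atan2_eq; lra.
    by split; apply: bnd; lra.
  case: (Rle_dec A0 t1) => c4 /=.
    have e : 1 / 1 = 1 by field.
    rewrite e; do 2 (split; first lra).
    split; first by apply: slope_lo; rewrite ?atan_1; lra.
    split; first by apply: slope_hi; rewrite ?atan_1; lra.
    by split; apply: bnd; lra.
  do 2 (split; first lra).
  split; first by apply: slope_lo; rewrite -/A0; lra.
  split; first by apply: slope_hi; rewrite -/A0; lra.
  by split; apply: bnd; lra.
rewrite -/A0 in c2.
have c2' : t2 - t1 <= A0 by lra.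
case: (Rle_dec t2 (PI / 4)) => c3 /=.
  have [k1 [k2 [k3 [k4 [k5 k6]]]]] := core3 h0 h1 c3 c2'.
  do 4 (split; first lra); split; lra.
case: (Rlt_dec t1 (PI / 4)) => c4 /=.
  have e : 1 / 1 = 1 by field.
  rewrite e; do 2 (split; first lra).
  split; first by apply: slope_lo; rewrite ?atan_1; lra.
  split; first by apply: slope_hi; rewrite ?atan_1; lra.
  by split; apply: bnd; lra.
have e : PI / 2 - t1 - (PI / 2 - t2) = t2 - t1 by ring.
have := core3 (s1 := PI/2 - t2) (s2 := PI/2 - t1) ltac:(lra) ltac:(lra) ltac:(lra) ltac:(lra).
rewrite e /=.
set d := Defs.Zceil (/ (t2 - t1)); set y := Defs.Zfloor _.
move=> [k1 [k2 [k3 [k4 [k5 k6]]]]].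
have ts2 : tan t1 = / tan (PI/2 - t1).
  rewrite -tan_shift; last lra. by congr tan; ring.
have ts2p : 0 < tan (PI/2 - t1) by apply: tan_gt_0; lra.
have inv : IZR d / IZR y = / (IZR y / IZR d) by field; lra.
have q : 0 < IZR y / IZR d by apply: Rdiv_lt_0_compat.
do 2 (split; first lra).
split.
  rewrite ts2 inv; apply: Rinv_lt_contravar => //; nra.
split.
  case: (Req_dec t2 (PI/2)) => [->|ne]; first by left.
  right.
  have ts1 : tan t2 = / tan (PI/2 - t2).
    rewrite -tan_shift; last lra. by congr tan; ring.
  have ts1p : 0 < tan (PI/2 - t2) by apply: tan_gt_0; lra.
  rewrite ts1 inv; apply: Rinv_lt_contravar => //; nra.
split; lra.
Qed.

Definition gfun w := Rmax 1 (PI / (2 * w)).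

Lemma polar_of x y t1 t2 : 0 < x -> 0 < y -> 0 <= t1 -> t1 < t2 -> t2 <= PI/2 ->
  tan t1 < y / x -> (t2 = PI/2 \/ y / x < tan t2) ->
  exists rho th, 0 < rho /\ t1 < th < t2 /\ x = rho * cos th /\ y = rho * sin th.
Proof.
move=> hx hy h0 h1 h2 lo hi.
have hp := PI_RGT_0.
set th := atan (y / x).
have [b1 b2] := atan_bound (y / x).
have ct : 0 < cos th by apply: cos_gt_0; rewrite /th; lra.
exists (x / cos th), th; split; first by apply: Rdiv_lt_0_compat.
split; first split.
- rewrite -(@atan_tan t1); last lra.
  exact: atan_increasing.
- case: (Req_dec t2 (PI/2)) => [->|ne]; first by rewrite /th; lra.
  case: hi => [//|hi].
  rewrite -(@atan_tan t2); last lra.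
  exact: atan_increasing.
split; first by field; lra.
have : tan th = y / x by rewrite /th tan_atan.
rewrite /tan => e.
have -> : sin th = y / x * cos th by rewrite -e; field; lra.
field; lra.
Qed.

Lemma P2_spec b1 b2 : 0 <= b1 -> b1 < b2 -> b2 <= PI ->
  let p := P2 b1 b2 in
  (exists rho th, 0 < rho /\ b1 < th < b2 /\ IZR p.1 = rho * cos th /\ IZR p.2 = rho * sin th) /\
  Rabs (IZR p.1) <= gfun (b2 - b1) /\ IZR p.2 <= gfun (b2 - b1).
Proof.
move=> h0 h1 h2 p.
have hp := PI_RGT_0.
have gmax : forall w, PI / (2 * w) <= gfun w by move=> w; apply: Rmax_r.
have g1 : forall w, 1 <= gfun w by move=> w; apply: Rmax_l.
rewrite /p /P2.
case: (Rlt_dec b1 (PI / 2)) => c1; case: (Rlt_dec (PI / 2) b2) => c2 /=.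
- split; last by rewrite Rabs_R0; split; [have := g1 (b2 - b1); lra | apply: g1].
  exists 1, (PI/2); rewrite cos_PI2 sin_PI2; lra.
- have c2' : b2 <= PI / 2 by lra.
  destruct (Rle_dec b2 (PI / 2)) as [c3|c3]; last lra. simpl.
  have [k1 [k2 [k3 [k4 [k5 k6]]]]] := P1_spec h0 h1 c2'.
  split; first exact: polar_of k1 k2 h0 h1 c2' k3 k4.
  rewrite Rabs_pos_eq; last lra.
  have := gmax (b2 - b1); lra.
- have c1' : PI / 2 <= b1 by lra.
  destruct (Rle_dec b2 (PI / 2)) as [c3|c3]; first lra. simpl.
  have [k1 [k2 [k3 [k4 [k5 k6]]]]] := P1_spec (t1 := PI - b2) (t2 := PI - b1) ltac:(lra) ltac:(lra) ltac:(lra).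
  have e : PI - b1 - (PI - b2) = b2 - b1 by ring.
  rewrite e in k5 k6.
  split.
    have [rho [th [q1 [q2 [q3 q4]]]]] := polar_of k1 k2 (t1 := PI - b2) (t2 := PI - b1) ltac:(lra) ltac:(lra) ltac:(lra) k3 k4.
    exists rho, (PI - th); split => //; split; first lra.
    rewrite /= opp_IZR q3 q4 Rtrigo_facts.cos_pi_minus sin_PI_x; split; ring.
  rewrite /= opp_IZR Rabs_Ropp Rabs_pos_eq; last lra.
  have := gmax (b2 - b1); lra.
- lra.
Qed.

Local Close Scope R_scope.

Section TreeA.
Variables (V : finType) (r : V) (par : V -> V).
Hypothesis (Hpr : par r = r) (Hreach : forall v, fconnect par v r).

Lemma iter_r k : iter k par r = r.
Proof. by elim: k => //= k ->. Qed.

Lemma reach_iter x : exists k, iter k par x = r.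
Proof. by exists (findex par x r); apply: iter_findex. Qed.

Lemma fcP x y : reflect (exists k, iter k par x = y) (fconnect par x y).
Proof.
apply: (iffP idP) => [H|[k <-]]; last exact: fconnect_iter.
by exists (findex par x y); apply: iter_findex.
Qed.

Lemma iter_mul k m x : iter k par x = x -> iter (m * k) par x = x.
Proof.
move=> H; elim: m => [|m IH]; first by [].
by rewrite mulSn iterD IH H.
Qed.

Lemma acyc k x : (0 < k)%N -> iter k par x = x -> x = r.
Proof.
move=> k0 H; have [K HK] := reach_iter x.
have E := iter_mul K H.
have le : (K <= K * k)%N by rewrite leq_pmulr.
by move: E; rewrite -(subnK le) iterD HK iter_r.
Qed.

Lemma anc_antisym x y : fconnect par x y -> fconnect par y x -> x = y.
Proof.
move=> /fcP[a Ha] /fcP[b Hb].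
case: (posnP (b + a)) => [/eqP|hp].
  by rewrite addn_eq0 => /andP[/eqP b0 /eqP a0]; rewrite -Ha a0.
have xr : x = r by apply: (acyc hp); rewrite iterD Ha Hb.
by rewrite -Ha xr iter_r.
Qed.

Lemma iter_par k x : iter k.+1 par x = par (iter k par x).
Proof. by []. Qed.

Lemma fc_par x y : fconnect par x y -> x != y -> fconnect par (par x) y.
Proof.
move=> /fcP[[|k] Hk] nxy; first by rewrite -Hk eqxx in nxy.
by apply/fcP; exists k; rewrite -iterSr.
Qed.

Lemma fc_trans x y z : fconnect par x y -> fconnect par y z -> fconnect par x z.
Proof. exact: connect_trans. Qed.

Lemma fc_step x : fconnect par x (par x).
Proof. by apply/fcP; exists 1%N. Qed.

Lemma desc_ind (c : V) (P : V -> Prop) :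
  P c -> (forall x, x != c -> fconnect par (par x) c -> P (par x) -> P x) ->
  forall x, fconnect par x c -> P x.
Proof.
move=> Pc IH x /fcP[k]; elim: k x => [|k IHk] x /= Hk; first by rewrite Hk.
case: (eqVneq x c) => [->//|nxc].
have h : fconnect par (par x) c by apply/fcP; exists k; rewrite -iterSr.
by apply: IH => //; apply: IHk; rewrite -iterSr.
Qed.

Lemma depth_ind (P : V -> Prop) :
  P r -> (forall x, x != r -> P (par x) -> P x) -> forall x, P x.
Proof.
move=> Pr IH x; apply: (@desc_ind r) => // y ny _; exact: IH.
Qed.

Lemma trich x y : fconnect par y x \/ fconnect par x y \/
  exists w c1 c2, [/\ c1 != c2, c1 != r, c2 != r & par c1 = w] /\
                 [/\ par c2 = w, fconnect par x c1 & fconnect par y c2].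
Proof.
have ex : exists k, fconnect par y (iter k par x).
  by have [K HK] := reach_iter x; exists K; rewrite HK.
case: (ex_minnP ex) => k Hk Hmin.
case: k Hk Hmin => [|k] Hk Hmin; first by left.
set w := iter k.+1 par x in Hk.
have ex2 : exists j, iter j par y == w by have /fcP[j Hj] := Hk; exists j; rewrite Hj.
case: (ex_minnP ex2) => j /eqP Hj Hmin2.
case: j Hj Hmin2 => [|j] Hj Hmin2.
  by right; left; rewrite /= in Hj; rewrite Hj; apply: fconnect_iter.
right; right; exists w, (iter k par x), (iter j par y).
have nc1 : ~~ fconnect par y (iter k par x).
  by apply/negP => /Hmin; rewrite ltnn.
split; split => //.
- apply/eqP => e; move: nc1; rewrite e; by rewrite fconnect_iter.
- apply/eqP => e; move: nc1; rewrite e; by rewrite Hreach.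
- apply/eqP => e.
  have : iter j par y == w by rewrite e -Hj /= e Hpr.
  by move/Hmin2; rewrite ltnn.
- exact: fconnect_iter.
- exact: fconnect_iter.
Qed.

Lemma two_children w c1 c2 : c1 != r -> c2 != r -> par c1 = par c2 ->
  fconnect par w c1 -> fconnect par w c2 -> c1 = c2.
Proof.
move=> n1 n2 e /fcP[i Hi] /fcP[j Hj].
wlog le : i j c1 c2 n1 n2 e Hi Hj / (i <= j)%N.
  move=> H; case: (leqP i j) => h; first exact: (H i j).
  by apply/esym; apply: (H j i) => //; apply: ltnW.
case: (posnP (j - i)) => [/eqP|hp].
  rewrite subn_eq0 => h; have eij : i = j by apply/eqP; rewrite eqn_leq le h.
  by rewrite -Hi -Hj eij.
have E : iter (j - i) par c1 = c2 by rewrite -Hi -iterD subnK.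
have : iter (j - i) par (par c1) = par c1.
  by rewrite -iterSr iterS E e.
move=> /(acyc hp) pr.
move: E; rewrite -(prednK hp) iterSr pr iter_r => c2r.
by rewrite c2r eqxx in n2.
Qed.


Definition T_ (v : V) : {pred V} := [pred w | fconnect par w v].

Lemma sz_T v : subtree_size par v = #|T_ v|.
Proof. by []. Qed.

Lemma sz_pos v : (0 < subtree_size par v)%N.
Proof. by apply/card_gt0P; exists v; rewrite inE connect0. Qed.

Lemma sz_root : subtree_size par r = #|V|.
Proof. by apply: eq_card => w; rewrite !inE Hreach. Qed.

Lemma child_not_anc v : v != r -> ~~ fconnect par (par v) v.
Proof.
move=> nv; apply/negP => h.
have e := anc_antisym h (fc_step v).
have : iter 1 par v = v by rewrite /= e.
by move/(acyc (isT : (0 < 1)%N)) => vr; rewrite vr eqxx in nv.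
Qed.

Lemma sz_child v : v != r -> (subtree_size par v < subtree_size par (par v))%N.
Proof.
move=> nv; rewrite !sz_T (cardD1 (par v) (T_ (par v))) inE connect0 add1n ltnS.
apply: subset_leq_card; apply/subsetP => w; rewrite !inE => h.
apply/andP; split; last exact: fc_trans h (fc_step v).
apply/eqP => e; move: h; rewrite e; apply/negP; exact: child_not_anc.
Qed.

Definition UA (s : seq V) : {pred V} := [pred w | has (fun c => fconnect par w c) s].

Lemma card_UA u s : uniq s -> (forall c, c \in s -> c != r /\ par c = u) ->
  #|UA s| = \sum_(c <- s) subtree_size par c.
Proof.
elim: s => [|c s IH] /= Hu Hs.
  by rewrite big_nil; apply: eq_card0 => w; rewrite !inE.
rewrite big_cons -IH; last by move=> d ds; apply: Hs; rewrite inE ds orbT.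
  2: by case/andP: Hu.
have [nc pc] := Hs c (mem_head _ _).
rewrite sz_T.
have -> : #|UA (c :: s)| = #|[predU T_ c & UA s]| by apply: eq_card => w; rewrite !inE.
rewrite -(cardUI (T_ c) (UA s)) -[X in X = _]addn0; congr (_ + _); apply/esym.
apply: eq_card0 => w; rewrite !inE; apply/negP => /andP[h1 /hasP[d ds h2]].
have [nd pd] := Hs d (mem_behead (ds : d \in behead (c :: s))).
have cd : c = d by apply: (two_children nc nd _ h1 h2); rewrite pc pd.
by case/andP: Hu; rewrite cd ds.
Qed.

Lemma sum_children u s : uniq s -> (forall c, c \in s -> c != r /\ par c = u) ->
  (\sum_(c <- s) subtree_size par c <= subtree_size par u - 1)%N.
Proof.
move=> Hu Hs; rewrite -(card_UA Hu Hs) sz_T (cardD1 u (T_ u)) inE connect0 add1n subn1 /=.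
apply: subset_leq_card; apply/subsetP => w; rewrite !inE => /hasP[c cs h].
have [nc pc] := Hs c cs.
have hu : fconnect par w u by rewrite -pc; exact: fc_trans h (fc_step c).
rewrite hu andbT; apply/eqP => e; move: h; rewrite e -pc; apply/negP; exact: child_not_anc.
Qed.


Variables (ch : V -> seq V) (a1 a2 : V -> R).
Hypotheses (Hch : child_order r par ch) (Hs : strategy1 r par ch a1 a2).

Local Open Scope R_scope.

Definition Dn u := INR (subtree_size par u - 1).
Definition Sn u i := INR (\sum_(c <- take i (ch u)) subtree_size par c).

Lemma INR_addn m n : INR (m + n) = INR m + INR n.
Proof. by rewrite -plusE plus_INR. Qed.

Lemma INR_leq m n : (m <= n)%N -> INR m <= INR n.
Proof. by move/leP; apply: le_INR. Qed.

Lemma in_ch u v : (v \in ch u) = (v != r) && (par v == u).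
Proof. by have [_ ->] := Hch u. Qed.

Lemma ch_uniq u : uniq (ch u).
Proof. by have [-> _] := Hch u. Qed.

Lemma nth_ch u i : (i < size (ch u))%N -> nth u (ch u) i != r /\ par (nth u (ch u) i) = u.
Proof.
move=> hi; have : nth u (ch u) i \in ch u by apply: mem_nth.
by rewrite in_ch => /andP[-> /eqP ->].
Qed.

Lemma Sn_succ u i : (i < size (ch u))%N ->
  Sn u i.+1 = Sn u i + INR (subtree_size par (nth u (ch u) i)).
Proof.
move=> hi; rewrite /Sn (take_nth u hi) -cats1 big_cat big_seq1 /=.
by rewrite INR_addn.
Qed.

Lemma a_formula u i : (i < size (ch u))%N ->
  a1 (nth u (ch u) i) = a1 u + (a2 u - a1 u) * (Sn u i / Dn u) /\
  a2 (nth u (ch u) i) = a1 u + (a2 u - a1 u) * (Sn u i.+1 / Dn u).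
Proof.
have [_ [_ H]] := Hs.
elim: i => [|i IH] hi.
  have [h1 h2] := H u 0%N hi; simpl in h1, h2.
  have e : Sn u 1 = INR (subtree_size par (nth u (ch u) 0)) by rewrite (Sn_succ hi) /Sn take0 big_nil /= Rplus_0_l.
  rewrite /Sn take0 big_nil /=; split; first lra.
  rewrite h2 h1 -/(Sn u 1) e /Rdiv /Dn; lra.
have hi' : (i < size (ch u))%N by apply: ltnW.
have [IH1 IH2] := IH hi'.
have [h1 h2] := H u i.+1 hi; simpl in h1, h2.
split; first by rewrite h1 IH2.
rewrite h2 h1 IH2 (Sn_succ hi) /Rdiv /Dn; lra.
Qed.


Lemma Sn_ge0 u i : 0 <= Sn u i.
Proof. exact: pos_INR. Qed.

Lemma Sn_le_succ u i : Sn u i <= Sn u i.+1.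
Proof.
case: (ltnP i (size (ch u))) => hi.
  rewrite (Sn_succ hi); have := pos_INR (subtree_size par (nth u (ch u) i)); lra.
by rewrite /Sn !take_oversize //; [lra | apply: (leq_trans hi)].
Qed.

Lemma Sn_mono u i j : (i <= j)%N -> Sn u i <= Sn u j.
Proof.
move=> /subnK <-; elim: (j - i)%N => [|k IH]; first by rewrite add0n; lra.
rewrite addSn; have := Sn_le_succ u (k + i); lra.
Qed.

Lemma Sn_le_D u i : Sn u i <= Dn u.
Proof.
rewrite /Sn /Dn; apply: INR_leq; apply: sum_children.
  exact: take_uniq (ch_uniq u).
by move=> c /mem_take; rewrite in_ch => /andP[-> /eqP ->].
Qed.

Lemma sz_ge1 v : 1 <= INR (subtree_size par v).
Proof. exact: (INR_leq (sz_pos v)). Qed.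

Lemma ch_index v : v != r -> (index v (ch (par v)) < size (ch (par v)))%N /\
   nth (par v) (ch (par v)) (index v (ch (par v))) = v.
Proof.
move=> nv; have h : v \in ch (par v) by rewrite in_ch nv eqxx.
by rewrite index_mem h nth_index.
Qed.

Lemma Dn_pos v : v != r -> 0 < Dn (par v).
Proof.
move=> nv; have [hi e] := ch_index nv.
have := Sn_le_D (par v) (index v (ch (par v))).+1.
rewrite (Sn_succ hi) e; have := Sn_ge0 (par v) (index v (ch (par v))); have := sz_ge1 v; lra.
Qed.

Lemma width_child v : v != r ->
  a2 v - a1 v = (a2 (par v) - a1 (par v)) * (INR (subtree_size par v) / Dn (par v)).
Proof.
move=> nv; have [hi e] := ch_index nv.
have [_ [_ H]] := Hs; have [_ h2] := H _ _ hi; simpl in h2.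
rewrite e in h2; rewrite h2 /Dn; lra.
Qed.

Lemma child_bounds v : v != r -> a1 (par v) < a2 (par v) ->
  a1 (par v) <= a1 v /\ a1 v < a2 v /\ a2 v <= a2 (par v).
Proof.
move=> nv hlt; have [hi e] := ch_index nv.
have [f1 f2] := a_formula hi; rewrite e in f1 f2.
set i := index v (ch (par v)) in f1 f2 hi e.
have hS := Sn_succ hi; rewrite e in hS.
have hD := Dn_pos nv.
have h0 := Sn_ge0 (par v) i; have h1 := Sn_le_D (par v) i.+1; have h2 := sz_ge1 v.
set D := Dn (par v) in f1 f2 hD h1.
set t1 := Sn (par v) i / D in f1.
set t2 := Sn (par v) i.+1 / D in f2.
have g1 : 0 <= t1 by apply: Rmult_le_pos; [lra | left; apply: Rinv_0_lt_compat; lra].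
have g2 : t1 < t2 by apply: Rmult_lt_compat_r; [apply: Rinv_0_lt_compat; lra | lra].
have g3 : t2 <= 1.
  rewrite /t2 -(Rdiv_diag D); last lra.
  by apply: Rmult_le_compat_r; [left; apply: Rinv_0_lt_compat; lra | lra].
set d := a2 (par v) - a1 (par v) in f1 f2.
have hd : 0 < d by rewrite /d; lra.
have k1 : 0 <= d * t1 by apply: Rmult_le_pos; lra.
have k2 : d * t1 < d * t2 by apply: Rmult_lt_compat_l.
have k3 : d * t2 <= d * 1 by apply: Rmult_le_compat_l; lra.
have hdd : d = a2 (par v) - a1 (par v) by []. clearbody d t1 t2 D. split; [lra|split; lra].
Qed.

Lemma ang_ok x : 0 <= a1 x /\ a1 x < a2 x /\ a2 x <= PI.
Proof.
have [h1 [h2 _]] := Hs.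
elim/depth_ind: x => [|x nx [IH1 [IH2 IH3]]].
  by rewrite h1 h2; have := PI_RGT_0; lra.
have := child_bounds nx IH2; lra.
Qed.

Lemma child_sub v : v != r -> a1 (par v) <= a1 v /\ a2 v <= a2 (par v).
Proof. move=> nv; have [_ [h _]] := ang_ok (par v); have := child_bounds nv h; lra. Qed.

Lemma desc_sub c x : fconnect par x c -> a1 c <= a1 x /\ a2 x <= a2 c.
Proof.
move: x; apply: (@desc_ind c) => [|x nxc hp [IH1 IH2]]; first lra.
have nx : x != r.
  apply/eqP => xr; move: hp; rewrite xr Hpr => h.
  by move: nxc; rewrite xr (anc_antisym (Hreach c) h) eqxx.
have := child_sub nx; lra.
Qed.

Lemma siblings c1 c2 : c1 != c2 -> c1 != r -> c2 != r -> par c1 = par c2 ->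
  a2 c1 <= a1 c2 \/ a2 c2 <= a1 c1.
Proof.
move=> n12 n1 n2 e.
have [hi1 e1] := ch_index n1; have [hi2 e2] := ch_index n2.
rewrite e in hi1 e1.
set u := par c2 in hi1 hi2 e1 e2.
have [_ [hu _]] := ang_ok u.
have hD := Dn_pos n2.
have key : forall i j, (i < j)%N -> (j < size (ch u))%N ->
    a2 (nth u (ch u) i) <= a1 (nth u (ch u) j).
  move=> i j hij hj; have hi := ltn_trans hij hj.
  have [_ f2] := a_formula hi; have [f1 _] := a_formula hj.
  rewrite f2 f1; have := Sn_mono u hij.
  move=> hm; apply: Rplus_le_compat_l; apply: Rmult_le_compat_l; first lra.
  by apply: Rmult_le_compat_r; [left; apply: Rinv_0_lt_compat; exact: hD| lra].
case: (ltngtP (index c1 (ch u)) (index c2 (ch u))) => h.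
- by left; rewrite -{1}e1 -e2; apply: key.
- by right; rewrite -{1}e2 -e1; apply: key.
- by move: n12; rewrite -e1 -e2 h eqxx.
Qed.


Local Close Scope R_scope.
Variables (adj : rel V) (pos : V -> Z * Z).
Hypotheses (Htree : is_tree adj) (Hadj : forall v, v != r -> adj v (par v)).

Lemma adj_sym x y : adj x y = adj y x.
Proof. by have [h _] := Htree; apply: h. Qed.

Lemma adj_irr x : adj x x = false.
Proof. by have [_ [h _]] := Htree; apply: h. Qed.

Lemma adj_par_l v : v != r -> adj (par v) v.
Proof. by move=> nv; rewrite adj_sym; apply: Hadj. Qed.

Lemma traj_uniq x n : (forall i, (i.+1 < n)%N -> iter i par x != r) -> uniq (traject par x n).
Proof.
elim: n x => [|n IH] x H //=.
apply/andP; split; last first.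
  apply: IH => i hi; rewrite -iterSr; exact: H.
apply/negP => /trajectP[i hi e].
have : iter i.+1 par x = x by rewrite iterSr -e.
move/(acyc (isT : (0 < i.+1)%N)) => xr.
have h0 : (1 < n.+1)%N by rewrite ltnS; apply: (leq_ltn_trans (leq0n i) hi).
by move: (H 0%N h0); rewrite /= xr eqxx.
Qed.

Lemma up_path_adj k x : (forall i, (i < k)%N -> iter i par x != r) ->
  path adj x (traject par (par x) k).
Proof.
elim: k x => [|k IH] x H //=.
rewrite Hadj; last exact: (H 0%N).
apply: IH => i hi; rewrite -iterSr; exact: H.
Qed.

Lemma down_path_adj w j y : iter j par y = w -> (forall l, (l < j)%N -> iter l par y != r) ->
  path adj w (rev (traject par y j)).
Proof.
elim: j y => [|j IH] y Hj H //=.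
rewrite rev_cons rcons_path; apply/andP; split.
  by apply: IH => [|l hl]; rewrite -iterSr //; exact: H.
have -> : last w (rev (traject par (par y) j)) = par y.
  case: j {IH H} Hj => [|j] /= Hj; first by rewrite Hj.
  by rewrite rev_cons last_rcons.
exact: adj_par_l (H 0%N _).
Qed.

Lemma mk_cycle x y w k j : adj y x -> iter k par x = w -> iter j par y = w ->
  (forall i, (i < k)%N -> iter i par x != w) -> (forall l, (l < j)%N -> iter l par y != w) ->
  (forall i l, (i < k)%N -> (l < j)%N -> iter i par x != iter l par y) -> (2 <= k + j)%N -> False.
Proof.
move=> hyx hk hj mk mj dis s2.
have nrx : forall i, (i < k)%N -> iter i par x != r.
  move=> i hi; apply/eqP => e.
  by move: (mk i hi); rewrite -hk -(subnK (ltnW hi)) iterD e iter_r eqxx.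
have nry : forall i, (i < j)%N -> iter i par y != r.
  move=> i hi; apply/eqP => e.
  by move: (mj i hi); rewrite -hj -(subnK (ltnW hi)) iterD e iter_r eqxx.
have [_ [_ [_ Hc]]] := Htree; apply: Hc.
exists (traject par x k.+1 ++ rev (traject par y j)); split.
- rewrite cat_uniq rev_uniq; apply/and3P; split.
  + by apply: traj_uniq => i; rewrite ltnS; apply: nrx.
  + rewrite has_rev; apply/hasPn => z /trajectP[l hl ->]; apply/negP => /trajectP[i hi e].
    move: hi; rewrite ltnS leq_eqVlt => /orP[/eqP ik|hi].
      by move: (mj l hl); rewrite e ik hk eqxx.
    by move: (dis i l hi hl); rewrite e eqxx.
  + by apply: traj_uniq => i hi; apply: nry; apply: ltnW.
- by rewrite size_cat size_rev !size_traject addSn ltnS.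
- have e : last y (traject par x k.+1 ++ rev (traject par y j)) = y.
    rewrite last_cat /= last_traject hk.
    by case: j {mj dis s2 nry} hj => [|j] /= hj; [rewrite hj | rewrite rev_cons last_rcons].
  rewrite (cycle_path y) e cat_path /= hyx up_path_adj // last_traject hk /=.
  exact: down_path_adj hj nry.
Qed.

Lemma min_iter x z : fconnect par x z ->
  exists k, [/\ iter k par x = z, (forall i, (i < k)%N -> iter i par x != z) &
                (forall n, iter n par x = z -> (k <= n)%N)].
Proof.
move=> /fcP[K HK].
have ex : exists n, iter n par x == z by exists K; rewrite HK.
case: (ex_minnP ex) => k /eqP hk kmin; exists k; split => //.
  move=> i hi; apply/negP => /kmin; rewrite leqNgt hi //.
by move=> n hn; apply: kmin; rewrite hn.
Qed.

Lemma anc_adj x z : fconnect par x z -> adj z x -> x != z -> z != par x -> False.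
Proof.
move=> hf hzx nxz nzp.
have [k [hk mk _]] := min_iter hf.
apply: (@mk_cycle x z z k 0%N) => //.
case: k hk {mk} => [|[|k]] /= hk; first by rewrite hk eqxx in nxz.
  by rewrite hk eqxx in nzp.
by [].
Qed.

Lemma not_child_self c w : c != r -> par c = w -> ~~ fconnect par w c.
Proof. move=> nc <-; exact: child_not_anc. Qed.

Lemma in_sub_desc x c w k i : fconnect par x c -> par c = w -> iter k par x = w ->
  (forall n, iter n par x = w -> (k <= n)%N) -> (i < k)%N -> fconnect par (iter i par x) c.
Proof.
move=> /fcP[m hm] pc hk kmin hi.
have km : (k <= m.+1)%N by apply: kmin; rewrite iterS hm pc.
apply/fcP; exists (m - i)%N; rewrite -iterD subnK //.
by rewrite -ltnS; exact: leq_trans hi km.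
Qed.

Lemma adj_par a b : adj a b -> (b != r /\ a = par b) \/ (a != r /\ b = par a).
Proof.
move=> hab.
case: (eqVneq a (par b)) => [e|ne1].
  left; split => //; apply/eqP => br; move: hab; by rewrite e br Hpr adj_irr.
case: (eqVneq b (par a)) => [e|ne2].
  right; split => //; apply/eqP => ar; move: hab; by rewrite e ar Hpr adj_irr.
exfalso.
have nab : a != b by apply/eqP => e; move: hab; rewrite e adj_irr.
case: (trich a b) => [h|[h|[w [c1 [c2 [[n12 n1 n2 p1] [p2 f1 f2]]]]]]].
- by apply: (anc_adj h) => //; rewrite eq_sym.
- by apply: (anc_adj h) => //; rewrite adj_sym.
- have fa : fconnect par a w by rewrite -p1; exact: fc_trans f1 (fc_step c1).
  have fb : fconnect par b w by rewrite -p2; exact: fc_trans f2 (fc_step c2).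
  have [k [hk mk kmin]] := min_iter fa.
  have [j [hj mj jmin]] := min_iter fb.
  apply: (@mk_cycle a b w k j) => //.
  + by rewrite adj_sym.
  + move=> i l hi hl; apply/eqP => e.
    have d1 := in_sub_desc f1 p1 hk kmin hi.
    have d2 := in_sub_desc f2 p2 hj jmin hl.
    rewrite e in d1.
    by move: n12; rewrite (two_children n1 n2 _ d1 d2) ?eqxx // p1 p2.
  + have k1 : (0 < k)%N.
      case: k hk {mk kmin} => [|k] //= hk.
      by move: f1; rewrite hk (negbTE (not_child_self n1 p1)).
    have j1 : (0 < j)%N.
      case: j hj {mj jmin} => [|j] //= hj.
      by move: f2; rewrite hj (negbTE (not_child_self n2 p2)).
    by rewrite -(addn1 1); apply: leq_add.
Qed.

Hypotheses (Hgr : gravity_root adj r) (Hpl : placement r par a1 a2 pos).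

Local Open Scope R_scope.

Definition X v := IZR (pos v).1.
Definition Y v := IZR (pos v).2.
Definition Lf p q v := p * X v + q * Y v.

Lemma pos_step v : v != r ->
  X v = X (par v) + IZR (P2 (a1 v) (a2 v)).1 /\ Y v = Y (par v) + IZR (P2 (a1 v) (a2 v)).2.
Proof.
move=> nv; have [_ H] := Hpl; rewrite /X /Y (H v nv) /= !plus_IZR; by split.
Qed.

Lemma X_root : X r = 0 /\ Y r = 0.
Proof. by have [H _] := Hpl; rewrite /X /Y H. Qed.

Lemma edge v : v != r ->
  (exists rho th, 0 < rho /\ a1 v < th < a2 v /\ X v - X (par v) = rho * cos th /\
     Y v - Y (par v) = rho * sin th) /\
  Rabs (X v - X (par v)) <= gfun (a2 v - a1 v) /\ Y v - Y (par v) <= gfun (a2 v - a1 v).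
Proof.
move=> nv; have [e1 e2] := pos_step nv.
have [h0 [h1 h2]] := ang_ok v.
have [[rho [th [k1 [k2 [k3 k4]]]]] [k5 k6]] := P2_spec h0 h1 h2.
split; first by exists rho, th; rewrite e1 e2; split => //; split => //; split; [rewrite -k3|rewrite -k4]; ring.
by rewrite e1 e2; split; [have -> : X (par v) + IZR (P2 (a1 v) (a2 v)).1 - X (par v) = IZR (P2 (a1 v) (a2 v)).1 by ring | lra].
Qed.

Lemma desc_nr x c : c != r -> fconnect par x c -> x != r.
Proof.
move=> nc h; apply/eqP => xr; move: h; rewrite xr => h.
by move: nc; rewrite (anc_antisym (Hreach c) h) eqxx.
Qed.

Lemma edge_lin v p q : v != r ->
  (forall th, a1 v < th < a2 v -> 0 < p * cos th + q * sin th) -> Lf p q (par v) < Lf p q v.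
Proof.
move=> nv H; have [[rho [th [k1 [k2 [k3 k4]]]]] _] := edge nv.
have := H th k2 => h.
have : 0 < rho * (p * cos th + q * sin th) by apply: Rmult_lt_0_compat.
rewrite /Lf; nra.
Qed.

Lemma desc_lin c p q : c != r ->
  (forall th, a1 c < th < a2 c -> 0 < p * cos th + q * sin th) ->
  forall x, fconnect par x c -> Lf p q (par c) < Lf p q x.
Proof.
move=> nc H; apply: (@desc_ind c) => [|x nxc hp IH].
  exact: edge_lin nc H.
have nx : x != r by apply: (@desc_nr x c) => //; exact: fc_trans (fc_step x) hp.
have [s1 s2] := desc_sub hp.
have [t1 t2] := child_sub nx.
suff : Lf p q (par x) < Lf p q x by lra.
apply: edge_lin nx _ => th [h1 h2]; apply: H; lra.
Qed.

Lemma ypos c th : a1 c < th < a2 c -> 0 < 0 * cos th + 1 * sin th.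
Proof.
move=> [h1 h2]; have [k0 [_ k2]] := ang_ok c.
have : 0 < sin th by apply: sin_gt_0; lra.
lra.
Qed.

Definition wd v := a2 v - a1 v.
Definition Phi v := INR (subtree_size par v) * gfun (wd v).
Definition nR := INR #|V|.

Lemma gfun_ge1 w : 1 <= gfun w.
Proof. exact: Rmax_l. Qed.

Lemma wd_pos v : 0 < wd v.
Proof. have [_ [h _]] := ang_ok v; rewrite /wd; lra. Qed.

Lemma del_sym : symmetric (del_rel adj r).
Proof. by move=> x y; rewrite /del_rel /= adj_sym; case: (x != r); case: (y != r); rewrite ?andbT ?andbF. Qed.

Lemma comp_sub c : c != r -> par c = r ->
  (subtree_size par c <= #|[pred w | connect (del_rel adj r) c w]|)%N.
Proof.
move=> nc pc; rewrite sz_T; apply: subset_leq_card; apply/subsetP => x; rewrite !inE => hx.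
rewrite (sym_connect_sym del_sym).
move: x hx; apply: (@desc_ind c) => [|x nxc hp IH]; first exact: connect0.
apply: connect_trans IH; apply: connect1; rewrite /del_rel /= Hadj.
  rewrite (desc_nr nc (fc_trans (fc_step x) hp)) /=.
  exact: (desc_nr nc hp).
exact: (desc_nr nc (fc_trans (fc_step x) hp)).
Qed.

Lemma grav c : c != r -> par c = r -> INR (subtree_size par c) * 2 <= nR.
Proof.
move=> nc pc; have := Hgr nc => h.
have := comp_sub nc pc => h2.
rewrite /nR -[2]/(INR 2) -mult_INR; apply: INR_leq.
exact: leq_trans (leq_mul h2 (leqnn 2)) h.
Qed.

Lemma root_child_phi c : c != r -> par c = r -> Phi c <= nR / 2.
Proof.
move=> nc pc.
have hw := width_child nc; rewrite pc in hw.
have [h1 [h2 _]] := Hs; rewrite h1 h2 Rminus_0_r in hw.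
have hD := Dn_pos nc; rewrite pc in hD.
have hDn : Dn r = nR - 1.
  rewrite /Dn sz_root /nR minus_INR //.
  by apply/leP; apply/card_gt0P; exists r.
rewrite hDn in hw hD.
have g := grav nc pc; have s1 := sz_ge1 c.
set s := INR (subtree_size par c) in hw g s1 *.
rewrite /Phi -/s /gfun /wd hw.
have hp := PI_RGT_0.
have e : PI / (2 * (PI * (s / (nR - 1)))) = (nR - 1) / (2 * s) by field; lra.
rewrite e; apply: (Rmax_case_strong 1 ((nR - 1) / (2 * s)) (fun z => s * z <= nR / 2)) => _.
  lra.
have -> : s * ((nR - 1) / (2 * s)) = (nR - 1) / 2 by field; lra.
lra.
Qed.

Lemma phi_step v : v != r -> par v != r -> Phi v <= Phi (par v) - gfun (wd (par v)).
Proof.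
move=> nv nu.
have hw := width_child nv; rewrite -/(wd v) -/(wd (par v)) in hw.
have hD := Dn_pos nv.
have hs : INR (subtree_size par v) <= Dn (par v).
  rewrite /Dn; apply: INR_leq; rewrite leq_subRL; last exact: sz_pos.
  by rewrite add1n; apply: sz_child.
have hsu : INR (subtree_size par (par v)) = Dn (par v) + 1.
  rewrite /Dn minus_INR //; [simpl; lra | apply/leP; exact: sz_pos].
have wu := wd_pos (par v).
have s1 := sz_ge1 v.
set s := INR (subtree_size par v) in hw hs s1 *.
set D := Dn (par v) in hs hsu hD hw *.
set W := wd (par v) in hw wu *.
rewrite /Phi hsu -/s hw.
have g1 := gfun_ge1 W.
rewrite -/W; suff h : s * gfun (W * (s / D)) <= D * gfun W by nra.
rewrite {1}/gfun.
have e : PI / (2 * (W * (s / D))) = D * (PI / (2 * W)) / s by field; lra.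
rewrite e; apply: (Rmax_case_strong 1 (D * (PI / (2 * W)) / s) (fun z => s * z <= D * gfun W)) => _.
  nra.
have -> : s * (D * (PI / (2 * W)) / s) = D * (PI / (2 * W)) by field; lra.
apply: Rmult_le_compat_l; first lra.
exact: Rmax_r.
Qed.

Lemma inv_bound x : x != r ->
  Rabs (X x) <= nR / 2 - Phi x + gfun (wd x) /\ 0 < Y x /\ Y x <= nR / 2 - Phi x + gfun (wd x).
Proof.
elim/depth_ind: x => [|x nx IH _]; first by rewrite eqxx.
have [[rho [th [k1 [k2 [k3 k4]]]]] [b1 b2]] := edge nx.
rewrite -/(wd x) in b1 b2.
have dy : 0 < Y x - Y (par x).
  rewrite k4; apply: Rmult_lt_0_compat => //.
  have := ypos k2; lra.
have tri : Rabs (X x) <= Rabs (X (par x)) + Rabs (X x - X (par x)).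
  have -> : X x = X (par x) + (X x - X (par x)) by ring.
  have -> : X (par x) + (X x - X (par x)) - X (par x) = X x - X (par x) by ring.
  exact: Rabs_triang.
case: (eqVneq (par x) r) => [pr|nu].
  have [x0 y0] := X_root.
  have hp := root_child_phi nx pr.
  rewrite pr x0 y0 Rabs_R0 in tri dy b1 b2 *.
  split; first lra.
  split; lra.
have [i1 [i2 i3]] := IH nu.
have hp := phi_step nx nu.
split; first lra.
split; lra.
Qed.

Lemma all_bound x : Rabs (X x) <= nR / 2 /\ 0 <= Y x /\ Y x <= nR / 2.
Proof.
case: (eqVneq x r) => [->|nx].
  have [x0 y0] := X_root; rewrite x0 y0 Rabs_R0.
  have : 0 <= nR by apply: pos_INR.
  lra.
have [i1 [i2 i3]] := inv_bound nx.
have : gfun (wd x) <= Phi x.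
  rewrite /Phi; have := sz_ge1 x; have := gfun_ge1 (wd x); nra.
lra.
Qed.

Definition rltb (x y : R) : bool := if Rlt_dec x y then true else false.

Lemma rltbP x y : rltb x y -> x < y.
Proof. by rewrite /rltb; case: (Rlt_dec x y). Qed.

Lemma rltbT x y : x < y -> rltb x y.
Proof. by rewrite /rltb; case: (Rlt_dec x y). Qed.

Definition RL p q : rel V := fun a b => adj a b && rltb (Lf p q a) (Lf p q b).

Lemma up_path_R (e : rel V) k x : (forall i, (i < k)%N -> e (iter i par x) (par (iter i par x))) ->
  exists s, path e x s /\ last x s = iter k par x.
Proof.
elim: k x => [|k IH] x H; first by exists [::].
have H' : forall i, (i < k)%N -> e (iter i par (par x)) (par (iter i par (par x))).
  move=> i hi; rewrite -iterSr; exact: H i.+1 hi.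
have [s [h1 h2]] := IH (par x) H'.
exists (par x :: s); split; last by rewrite /= h2 -iterSr.
by rewrite /= h1 andbT; exact: (H 0%N).
Qed.

Lemma down_path_R (e : rel V) k x : (forall i, (i < k)%N -> e (par (iter i par x)) (iter i par x)) ->
  exists s, path e (iter k par x) s /\ last (iter k par x) s = x.
Proof.
elim: k x => [|k IH] x H; first by exists [::].
have H' : forall i, (i < k)%N -> e (par (iter i par (par x))) (iter i par (par x)).
  move=> i hi; rewrite -iterSr; exact: H i.+1 hi.
have [s [h1 h2]] := IH (par x) H'.
exists (rcons s x); rewrite iterSr rcons_path last_rcons h1 h2; split => //.
exact: (H 0%N).
Qed.

Lemma RL_up p q z : z != r ->
  (forall th, a1 z < th < a2 z -> p * cos th + q * sin th < 0) -> RL p q z (par z).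
Proof.
move=> nz H; rewrite /RL Hadj //=; apply: rltbT.
have := @edge_lin z (- p) (- q) nz; rewrite /Lf => h.
have : - p * X (par z) + - q * Y (par z) < - p * X z + - q * Y z.
  by apply: h => th hth; have := H th hth; lra.
lra.
Qed.

Lemma RL_down p q z : z != r ->
  (forall th, a1 z < th < a2 z -> 0 < p * cos th + q * sin th) -> RL p q (par z) z.
Proof.
move=> nz H; rewrite /RL adj_par_l //=; apply: rltbT; exact: edge_lin.
Qed.

Lemma mono_of_path p q u s : path (RL p q) u s -> monotone_path pos u s.
Proof.
move=> /(pathP u) H; exists p, q => i hi /=.
have := H i hi; rewrite /RL => /andP[_ /rltbP]; rewrite /Lf /X /Y.
have -> : nth u s i = nth u (u :: s) i.+1 by [].
lra.
Qed.

Lemma RL_adj p q x s : path (RL p q) x s -> path adj x s.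
Proof. by apply: sub_path => a b /andP[]. Qed.

Lemma iter_desc x k i : (i <= k)%N -> fconnect par (iter i par x) (iter k par x).
Proof. by move=> hik; apply/fcP; exists (k - i)%N; rewrite -iterD subnK. Qed.

Lemma min_nr x z k : iter k par x = z -> (forall i, (i < k)%N -> iter i par x != z) ->
  forall i, (i < k)%N -> iter i par x != r.
Proof.
move=> hk mk i hi; apply/eqP => e.
by move: (mk i hi); rewrite -hk -(subnK (ltnW hi)) iterD e iter_r eqxx.
Qed.

Lemma sin_lt0 t : - PI < t < 0 -> sin t < 0.
Proof.
move=> h; have : 0 < sin (- t) by apply: sin_gt_0; lra.
rewrite sin_neg; lra.
Qed.

Lemma sib_fun c1 c2 : c1 != c2 -> c1 != r -> c2 != r -> par c1 = par c2 ->
  exists p q, (forall th, a1 c1 < th < a2 c1 -> p * cos th + q * sin th < 0) /\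
              (forall th, a1 c2 < th < a2 c2 -> 0 < p * cos th + q * sin th).
Proof.
move=> n12 n1 n2 e.
have [g0 [g1 g2]] := ang_ok c1; have [k0 [k1 k2]] := ang_ok c2.
have hp := PI_RGT_0.
case: (siblings n12 n1 n2 e) => h.
- exists (- sin (a2 c1)), (cos (a2 c1)); split => th hth.
    have : sin (th - a2 c1) < 0 by apply: sin_lt0; lra.
    rewrite sin_minus; lra.
  have : 0 < sin (th - a2 c1) by apply: sin_gt_0; lra.
  rewrite sin_minus; lra.
- exists (sin (a2 c2)), (- cos (a2 c2)); split => th hth.
    have : sin (a2 c2 - th) < 0 by apply: sin_lt0; lra.
    rewrite sin_minus; lra.
  have : 0 < sin (a2 c2 - th) by apply: sin_gt_0; lra.
  rewrite sin_minus; lra.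
Qed.

Lemma mono_all : monotone_drawing adj pos.
Proof.
move=> u v.
case: (trich u v) => [h|[h|[w [c1 [c2 [[n12 n1 n2 p1] [p2 f1 f2]]]]]]].
- have [k [hk mk _]] := min_iter h.
  have [s [h1 h2]] : exists s, path (RL 0 1) (iter k par v) s /\ last (iter k par v) s = v.
    apply: down_path_R => i hi; apply: RL_down; first exact: min_nr hk mk i hi.
    by move=> th hth; apply: ypos hth.
  by exists s; rewrite -hk; split; [exact: RL_adj h1 | split => //; exact: mono_of_path h1].
- have [k [hk mk _]] := min_iter h.
  have [s [h1 h2]] : exists s, path (RL 0 (-1)) u s /\ last u s = iter k par u.
    apply: up_path_R => i hi; apply: RL_up; first exact: min_nr hk mk i hi.
    by move=> th hth; have := ypos hth; lra.
  by exists s; rewrite -hk; split; [exact: RL_adj h1 | split => //; exact: mono_of_path h1].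
- have fa : fconnect par u w by rewrite -p1; exact: fc_trans f1 (fc_step c1).
  have fb : fconnect par v w by rewrite -p2; exact: fc_trans f2 (fc_step c2).
  have [k [hk mk kmin]] := min_iter fa.
  have [j [hj mj jmin]] := min_iter fb.
  have [p [q [Hp Hq]]] := sib_fun n12 n1 n2 (etrans p1 (esym p2)).
  have [s1 [h1 h2]] : exists s, path (RL p q) u s /\ last u s = iter k par u.
    apply: up_path_R => i hi; have d := in_sub_desc f1 p1 hk kmin hi.
    have nz := desc_nr n1 d.
    apply: RL_up => // th hth; apply: Hp.
    have [s3 s4] := desc_sub d; lra.
  have [s2 [h3 h4]] : exists s, path (RL p q) (iter j par v) s /\ last (iter j par v) s = v.
    apply: down_path_R => i hi; have d := in_sub_desc f2 p2 hj jmin hi.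
    have nz := desc_nr n2 d.
    apply: RL_down => // th hth; apply: Hq.
    have [s3 s4] := desc_sub d; lra.
  have hp : path (RL p q) u (s1 ++ s2) by rewrite cat_path h1 h2 hk -hj h3.
  exists (s1 ++ s2); split; first exact: RL_adj hp.
  split; last exact: mono_of_path hp.
  by rewrite last_cat h2 hk -hj h4.
Qed.

Lemma desc_Y x y : fconnect par x y -> x != y -> Y y < Y x.
Proof.
move=> h nxy.
have [k [hk mk _]] := min_iter h.
case: k hk mk => [|k] hk mk; first by rewrite -hk eqxx in nxy.
have nc : iter k par x != r by apply: (min_nr hk mk).
have d : fconnect par x (iter k par x) by apply/fcP; exists k.
have := desc_lin nc (@ypos (iter k par x)) d.
by rewrite /Lf /= -[par (iter k par x)]/(iter k.+1 par x) hk; lra.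
Qed.

Lemma fX v : IZR (pos v).1 = X v. Proof. by []. Qed.
Lemma fY v : IZR (pos v).2 = Y v. Proof. by []. Qed.

Lemma seg_par q A B : on_segment q A B ->
  exists t, 0 <= t <= 1 /\ q.1 = A.1 + t * (B.1 - A.1) /\ q.2 = A.2 + t * (B.2 - A.2).
Proof. by []. Qed.

Lemma on_seg_sym q A B : on_segment q A B -> on_segment q B A.
Proof.
move=> [t [ht [h1 h2]]]; exists (1 - t); split; first lra.
rewrite h1 h2; split; ring.
Qed.

Lemma planar_desc v1 v2 q : v1 != r -> v2 != r -> v1 != v2 -> fconnect par v2 v1 ->
  on_segment q (rpt (pos (par v1))) (rpt (pos v1)) ->
  on_segment q (rpt (pos (par v2))) (rpt (pos v2)) ->
  exists z, (z = par v1 \/ z = v1) /\ (z = par v2 \/ z = v2) /\ q = rpt (pos z).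
Proof.
move=> n1 n2 n12 h [t1 [ht1 [q1 q2]]] [t2 [ht2 [r1 r2]]].
rewrite /rpt /= !fX !fY in q1 q2 r1 r2.
have e1 : Y (par v1) < Y v1.
  have := edge_lin n1 (@ypos v1); rewrite /Lf; lra.
have e2 : Y (par v2) < Y v2.
  have := edge_lin n2 (@ypos v2); rewrite /Lf; lra.
have hp2 : fconnect par (par v2) v1 by apply: fc_par => //; rewrite eq_sym.
case: (eqVneq (par v2) v1) => [pe|pn].
  rewrite pe in r1 r2 e2.
  have t1e : t1 = 1.
    have : (1 - t1) * (Y v1 - Y (par v1)) <= 0 by nra.
    move=> hh; have : (1 - t1) <= 0.
      case: (Rle_dec (1 - t1) 0) => // hn.
      have : 0 < (1 - t1) * (Y v1 - Y (par v1)) by apply: Rmult_lt_0_compat; lra.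
      lra.
    lra.
  exists v1; split; first by right.
  split; first by left.
  rewrite /rpt fX fY; move: q1 q2; rewrite t1e; case: q {r1 r2} => a b /= -> ->; congr pair; ring.
have := desc_Y hp2 pn => hy.
exfalso; nra.
Qed.

Lemma planar_sib v1 v2 w c1 c2 q : v1 != r -> v2 != r ->
  c1 != c2 -> c1 != r -> c2 != r -> par c1 = w -> par c2 = w ->
  fconnect par v1 c1 -> fconnect par v2 c2 ->
  on_segment q (rpt (pos (par v1))) (rpt (pos v1)) ->
  on_segment q (rpt (pos (par v2))) (rpt (pos v2)) ->
  exists z, (z = par v1 \/ z = v1) /\ (z = par v2 \/ z = v2) /\ q = rpt (pos z).
Proof.
move=> n1 n2 n12 nc1 nc2 p1 p2 f1 f2 [t1 [ht1 [q1 q2]]] [t2 [ht2 [r1 r2]]].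
rewrite /rpt /= !fX !fY in q1 q2 r1 r2.
have [p [qq [Hp Hq]]] := sib_fun n12 nc1 nc2 (etrans p1 (esym p2)).
have Hp' : forall th, a1 c1 < th < a2 c1 -> 0 < - p * cos th + - qq * sin th.
  by move=> th hth; have := Hp th hth; lra.
have B1 : Lf p qq v1 < Lf p qq w.
  have := desc_lin nc1 Hp' f1; rewrite p1 /Lf; lra.
have A1 : Lf p qq (par v1) <= Lf p qq w /\ (par v1 != w -> Lf p qq (par v1) < Lf p qq w).
  case: (eqVneq (par v1) w) => [e|ne]; first by rewrite e; split; [lra|move/eqP].

  have nv : v1 != c1 by apply/eqP => e; move: ne; rewrite e p1 eqxx.
  have := desc_lin nc1 Hp' (fc_par f1 nv); rewrite p1 /Lf => h; split; [lra|move=> _; lra].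
have B2 : Lf p qq w < Lf p qq v2.
  have := desc_lin nc2 Hq f2; rewrite p2 /Lf; lra.
have A2 : Lf p qq w <= Lf p qq (par v2) /\ (par v2 != w -> Lf p qq w < Lf p qq (par v2)).
  case: (eqVneq (par v2) w) => [e|ne]; first by rewrite e; split; [lra|move/eqP].

  have nv : v2 != c2 by apply/eqP => e; move: ne; rewrite e p2 eqxx.
  have := desc_lin nc2 Hq (fc_par f2 nv); rewrite p2 /Lf => h; split; [lra|move=> _; lra].
have F1 : p * q.1 + qq * q.2 = Lf p qq (par v1) + t1 * (Lf p qq v1 - Lf p qq (par v1)).
  rewrite q1 q2 /Lf; ring.
have F2 : p * q.1 + qq * q.2 = Lf p qq (par v2) + t2 * (Lf p qq v2 - Lf p qq (par v2)).
  rewrite r1 r2 /Lf; ring.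
set L1 := Lf p qq (par v1) in A1 F1; set L2 := Lf p qq (par v2) in A2 F2.
set M1 := Lf p qq v1 in B1 F1; set M2 := Lf p qq v2 in B2 F2; set W := Lf p qq w in A1 A2 B1 B2.
have [A1a A1b] := A1; have [A2a A2b] := A2.
have k1 : p * q.1 + qq * q.2 <= W by nra.
have k2 : W <= p * q.1 + qq * q.2 by nra.
have t1z : t1 = 0.
  case: (Req_dec t1 0) => // hn; exfalso.
  have : 0 < t1 * (W - M1) by apply: Rmult_lt_0_compat; lra.
  nra.
have t2z : t2 = 0.
  case: (Req_dec t2 0) => // hn; exfalso.
  have : 0 < t2 * (M2 - W) by apply: Rmult_lt_0_compat; lra.
  nra.
have pw1 : par v1 = w.
  apply/eqP; apply/negPn/negP => hn; have := A1b hn; rewrite t1z in F1; lra.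
have pw2 : par v2 = w.
  apply/eqP; apply/negPn/negP => hn; have := A2b hn; rewrite t2z in F2; lra.
exists w; split; first by left.
split; first by left.
rewrite /rpt fX fY; move: q1 q2; rewrite t1z pw1; case: q {F1 F2 k1 k2 r1 r2} => a b /= -> ->; congr pair; ring.
Qed.

Lemma inj_pos : injective pos.
Proof.
move=> a b e.
have eY : Y a = Y b by rewrite /Y e.
case: (trich a b) => [h|[h|[w [c1 [c2 [[n12 n1 n2 p1] [p2 f1 f2]]]]]]].
- case: (eqVneq b a) => [->//|nb]; have := desc_Y h nb; lra.
- case: (eqVneq a b) => [//|na]; have := desc_Y h na; lra.
- exfalso.
  have [p [qq [Hp Hq]]] := sib_fun n12 n1 n2 (etrans p1 (esym p2)).
  have Hp' : forall th, a1 c1 < th < a2 c1 -> 0 < - p * cos th + - qq * sin th.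
    by move=> th hth; have := Hp th hth; lra.
  have h1 := desc_lin n1 Hp' f1.
  have h2 := desc_lin n2 Hq f2.
  rewrite p1 in h1; rewrite p2 in h2.
  move: h1 h2; rewrite /Lf /X /Y e; lra.
Qed.

Lemma edge_norm a b q : adj a b -> on_segment q (rpt (pos a)) (rpt (pos b)) ->
  exists v, [/\ v != r, (a = par v /\ b = v) \/ (a = v /\ b = par v) &
            on_segment q (rpt (pos (par v))) (rpt (pos v))].
Proof.
move=> hab hs; case: (adj_par hab) => [[nb e]|[na e]].
  by exists b; split => //; [left | rewrite -e].
exists a; split => //; [right | rewrite -e]; first by [].
exact: on_seg_sym.
Qed.

Lemma planar_all : planar_drawing adj pos.
Proof.
split; first exact: inj_pos.
move=> a b c d q hab hcd hne s1 s2.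
have [v1 [n1 o1 g1]] := edge_norm hab s1.
have [v2 [n2 o2 g2]] := edge_norm hcd s2.
have n12 : v1 != v2.
  apply/eqP => e; subst v2; apply: hne.
  by case: o1 => [[-> ->]|[-> ->]]; case: o2 => [[-> ->]|[-> ->]]; auto.
have [z [z1 [z2 zq]]] : exists z, (z = par v1 \/ z = v1) /\ (z = par v2 \/ z = v2) /\ q = rpt (pos z).
  case: (trich v1 v2) => [h|[h|[w [c1 [c2 [[m12 m1 m2 p1] [p2 f1 f2]]]]]]].
  - exact: planar_desc n1 n2 n12 h g1 g2.
  - have n21 : v2 != v1 by rewrite eq_sym.
    have [z [k1 [k2 k3]]] := planar_desc n2 n1 n21 h g2 g1.
    by exists z.
  - exact: planar_sib n1 n2 m12 m1 m2 p1 p2 f1 f2 g1 g2.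
exists z; split; last split => //.
  by case: o1 => [[-> ->]|[-> ->]]; case: z1; auto.
by case: o2 => [[-> ->]|[-> ->]]; case: z2; auto.
Qed.

Lemma half_nat n : (n = ((n - odd n) %/ 2) * 2 + odd n)%N.
Proof.
have e : ((n - odd n) %/ 2 = n./2)%N.
  by rewrite -{1}(odd_double_half n) addKn -muln2 mulnK.
by rewrite e muln2 addnC odd_double_half.
Qed.

Lemma half_bound z n : IZR z <= INR n / 2 -> (z <= Z.of_nat ((n - odd n) %/ 2))%Z.
Proof.
move=> h; set m := ((n - odd n) %/ 2)%N.
have hn : INR n <= 2 * INR m + 1.
  rewrite {1}(half_nat n) -/m INR_addn -multE mult_INR.
  have : INR (odd n) <= 1 by case: (odd n) => /=; lra.
  have -> : INR 2 = 2 by simpl; lra.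
  lra.
have : (z < Z.of_nat m + 1)%Z.
  apply: lt_IZR; rewrite plus_IZR -INR_IZR_INZ; lra.
lia.
Qed.

Local Close Scope R_scope.
Lemma main_in : let n := #|V| in
  [/\ monotone_drawing adj pos, planar_drawing adj pos,
      (forall v : V,
          (Z.abs (pos v).1 <= Z.of_nat ((n - odd n) %/ 2))%Z /\
          (0 <= (pos v).2 <= Z.of_nat ((n - odd n) %/ 2))%Z)
    & (if odd n then fits_grid pos n ((n + 1) %/ 2)
       else fits_grid pos (n + 1) (n %/ 2 + 1))].
Proof.
move=> n.
have B : forall v : V,
    (Z.abs (pos v).1 <= Z.of_nat ((n - odd n) %/ 2))%Z /\
    (0 <= (pos v).2 <= Z.of_nat ((n - odd n) %/ 2))%Z.
  move=> v; have [b1 [b2 b3]] := all_bound v.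
  rewrite /X /Y /nR -/n in b1 b2 b3.
  have k1 : (- (pos v).1 <= Z.of_nat ((n - odd n) %/ 2))%Z.
    apply: half_bound; rewrite opp_IZR; have := Rle_abs (- IZR (pos v).1); rewrite Rabs_Ropp; lra.
  have k2 : ((pos v).1 <= Z.of_nat ((n - odd n) %/ 2))%Z.
    apply: half_bound; have := Rle_abs (IZR (pos v).1); lra.
  have k3 : ((pos v).2 <= Z.of_nat ((n - odd n) %/ 2))%Z by apply: half_bound.
  have k4 : (0 <= (pos v).2)%Z by apply: le_IZR.
  split; [lia | lia].
split => //.
- exact: mono_all.
- exact: planar_all.
set m := ((n - odd n) %/ 2)%N.
have hn := half_nat n; rewrite -/m in hn B.
have hZ : Z.of_nat n = (Z.of_nat m * 2 + Z.of_nat (odd n))%Z.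
  by rewrite {1}hn -plusE -multE Nat2Z.inj_add Nat2Z.inj_mul.
case ho: (odd n); rewrite ho /= in hZ.
- exists (- Z.of_nat m)%Z, 0%Z => v; have [h1 h2] := B v.
  have e : ((n + 1) %/ 2 = m + 1)%N.
    have -> : (n + 1 = (m + 1) * 2)%N by rewrite {1}hn ho mulnDl mul1n -addnA.
    by rewrite mulnK.
  rewrite e -plusE Nat2Z.inj_add /=; lia.
- exists (- Z.of_nat m)%Z, 0%Z => v; have [h1 h2] := B v.
  have e : (n %/ 2 = m)%N by rewrite {1}hn ho addn0 mulnK.
  rewrite e -!plusE !Nat2Z.inj_add /=; lia.
Qed.
End TreeA.

Theorem theorem5 (V : finType) (adj : rel V) (pos : V -> Z * Z) :
  is_tree adj -> algorithm2_drawing adj pos ->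
  let n := #|V| in
  [/\ monotone_drawing adj pos,
      planar_drawing adj pos,
      (forall v : V,
          (Z.abs (pos v).1 <= Z.of_nat ((n - odd n) %/ 2))%Z /\
          (0 <= (pos v).2 <= Z.of_nat ((n - odd n) %/ 2))%Z)
    & (if odd n then fits_grid pos n ((n + 1) %/ 2)
       else fits_grid pos (n + 1) (n %/ 2 + 1))].
Proof.
move=> Htree [r [par [ch [a1 [a2 [Hgr [Hpr [Hadj Hreach]] Hch Hs Hpl]]]]]].
exact: (main_in Hpr Hreach Hch Hs Htree Hadj Hgr Hpl).
Qed.
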